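(* Let $t\ge 1$ and let $0<m_1<m_2<\dots<m_t$ be integers. Then the multi-delimiter code $D_{m_1,\ldots,m_t}$ is complete, i.e. for every binary word $w\notin D_{m_1,\ldots,m_t}$ the set $D_{m_1,\ldots,m_t}\cup\{w\}$ is not uniquely decodable.
   Context: Binary words are elements of $\{0,1\}^*$; $1^r$ denotes the word of $r$ consecutive ones. For integers $0<m_1<\dots<m_t$, the multi-delimiter code $D_{m_1,\ldots,m_t}$ is the set consisting of the words $1^{m_i}0$ for $i=1,\dots,t$, together with all binary words $w$ satisfying: (i) for no $i$ does $w$ start with $1^{m_i}0$; (ii) $w$ ends with the suffix $01^{m_i}0$ for some $i$; (iii) for every $i$, the word $01^{m_i}0$ occurs in $w$ nowhere except as a suffix of $w$. A set of binary words is uniquely decodable if every finite concatenation of its words has a unique factorization into words of the set. *)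

(* Defs.v *)
From mathcomp Require Import all_boot.
Set Implicit Arguments. Unset Strict Implicit. Unset Printing Implicit Defensive.

(* Binary words: seq bool, with true = 1, false = 0. *)
Definition word := seq bool.

Definition ones_zero (r : nat) : word := rcons (nseq r true) false.
Definition delim (r : nat) : word := false :: ones_zero r.

Definition MDcode (ms : seq nat) (w : word) : Prop :=
  (exists2 m, m \in ms & w = ones_zero m) \/
  ( (forall m, m \in ms -> ~ prefix (ones_zero m) w) /\
    (exists2 m, m \in ms & suffix (delim m) w) /\
    (forall m, m \in ms -> forall u v : word,
        w = u ++ delim m ++ v -> v = [::]) ).

Definition uniquely_decodable (C : word -> Prop) : Prop :=
  forall xs ys : seq word,
    (forall x, x \in xs -> C x) -> (forall y, y \in ys -> C y) ->
    flatten xs = flatten ys -> xs = ys.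

(* Main.v *)
Require Import Defs.
From mathcomp Require Import all_boot.
From mathcomp Require Import zify.

Lemma cat_split {T : Type} {a b c d : seq T} : a ++ b = c ++ d ->
  (exists e, a = c ++ e /\ d = e ++ b) \/ (exists e, c = a ++ e /\ b = e ++ d).
Proof.
elim: a c => [|x a IH] [|y c] /= H.
- by left; exists [::].
- by right; exists (y :: c).
- by left; exists (x :: a).
- case: H => -> /IH [[e [-> ->]]|[e [-> ->]]].
  + by left; exists e.
  + by right; exists e.
Qed.

Lemma invariant {m : nat} {p r y : word} : rcons p false ++ r = y ++ delim m ->
  r = [::] \/ r = ones_zero m \/ exists y', r = y' ++ delim m.
Proof.
move=> H; case: (cat_split H) => [[e [He1 He2]]|[e [He1 He2]]]; last first.
  by right; right; exists e.
case: e He1 He2 => [|x e'] He1 He2.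
  by right; right; exists [::].
rewrite /delim /ones_zero /= in He2; case: He2 => Hx He2; subst x.
case: e' He1 He2 => [|x' e''] He1 He2.
  by right; left; rewrite /ones_zero He2.
have Hf : false \in x' :: e''.
  have := congr1 (last true) He1.
  rewrite last_rcons last_cat /= => ->; exact: mem_last.
rewrite -cats1 in He2.
case: (cat_split He2) => [[f [Hf1 Hf2]]|[f [Hf1 Hf2]]].
- have : false \in nseq m true by rewrite Hf1 mem_cat Hf.
  by rewrite mem_nseq andbF.
- case: f Hf1 Hf2 => [|z f'] Hf1 Hf2.
    by move: Hf; rewrite Hf1 cats0 mem_nseq andbF.
  by case: Hf2 => _; clear Hf1; case: f' => // ->; left.
Qed.

Lemma parse (ms : seq nat) (m : nat) : m \in ms -> forall n (z : word), size z <= n ->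
  (z = [::] \/ z = ones_zero m \/ exists y, z = y ++ delim m) ->
  exists ys : seq word, (forall x, x \in ys -> MDcode ms x) /\ flatten ys = z.
Proof.
move=> Hm; elim=> [|n IH] z Hs Hz.
  by exists [::]; split => //; case: z Hs {Hz}.
case: Hz => [->|[->|[y Hy]]].
- by exists [::].
- exists [:: ones_zero m]; split; last by rewrite /= cats0.
  by move=> x; rewrite inE => /eqP ->; left; exists m.
case: (boolP (has (fun i => prefix (ones_zero i) z) ms)).
  case/hasP => i Hi /prefixP [r Hr].
  have Hr' : rcons (nseq i true) false ++ r = y ++ delim m by rewrite -Hy Hr.
  have Hsr : size r <= n.
    by move: Hs; rewrite Hr size_cat /ones_zero size_rcons addSn ltnS; apply: leq_trans; apply: leq_addl.
  case: (IH r Hsr (invariant Hr')) => ys [Hys Hf].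
  exists (ones_zero i :: ys); split; last by rewrite /= Hf Hr.
  move=> x; rewrite inE => /orP [/eqP ->|]; last exact: Hys.
  by left; exists i.
move=> Hnp.
pose Q k := has (fun j => suffix (delim j) (take k z)) ms.
have exQ : exists k, Q k.
  exists (size z); apply/hasP; exists m => //; rewrite take_size Hy; exact: suffix_suffix.
case: (ex_minnP exQ) => k Hk Hmin.
have Hkz : k <= size z.
  apply: Hmin; apply/hasP; exists m => //; rewrite take_size Hy; exact: suffix_suffix.
have Hsk : size (take k z) = k by rewrite size_take_min; apply/minn_idPl.
case/hasP: Hk => j Hj /suffixP [u Hu].
have Hpiece : MDcode ms (take k z).
  right; split; [|split].
  - move=> i Hi Hpre; move/negP: Hnp; apply; apply/hasP; exists i => //.
    exact: prefix_trans Hpre (prefix_take _ _).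
  - by exists j => //; rewrite Hu; exact: suffix_suffix.
  - move=> i Hi u' v' Hd; case: v' Hd => [//|b v'] Hd; exfalso.
    have Hlt : size (u' ++ delim i) < k.
      by rewrite -Hsk Hd catA !size_cat /=; lia.
    have : k <= size (u' ++ delim i).
      apply: Hmin; apply/hasP; exists i => //.
      rewrite -(take_takel _ (ltnW Hlt)) Hd catA take_size_cat //.
      exact: suffix_suffix.
    by rewrite leqNgt Hlt.
have Hrc : rcons (u ++ false :: nseq j true) false ++ drop k z = y ++ delim m.
  rewrite -Hy -{2}(cat_take_drop k z) Hu /delim /ones_zero -!cats1 -!catA /=. by rewrite -catA.
have Hk0 : 0 < k by rewrite -Hsk Hu size_cat /delim /= addnS.
have Hsr : size (drop k z) <= n.
  by rewrite size_drop; lia.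
case: (IH _ Hsr (invariant Hrc)) => ys [Hys Hf].
exists (take k z :: ys); split; last by rewrite /= Hf cat_take_drop.
move=> x; rewrite inE => /orP [/eqP ->|]; last exact: Hys.
exact: Hpiece.
Qed.

Theorem theorem3 (ms : seq nat) :
  ms != [::] -> 0 < head 0 ms -> sorted ltn ms ->
  forall w : seq bool, ~ MDcode ms w ->
    ~ uniquely_decodable (fun x => MDcode ms x \/ x = w).
Proof.
move=> Hne _ _ w Hw UD.
have [m Hm] : exists m, m \in ms.
  by case: ms Hne {UD Hw} => // a s _; exists a; rewrite inE eqxx.
have [ys1 [H1 E1]] := @parse ms m Hm _ _ (leqnn (size (delim m))) (or_intror (or_intror (ex_intro _ [::] erefl))).
have [ys2 [H2 E2]] := @parse ms m Hm _ _ (leqnn (size (w ++ delim m))) (or_intror (or_intror (ex_intro _ w erefl))).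
have Heq : flatten (w :: ys1) = flatten ys2 by rewrite /= E1 E2.
have Exy : w :: ys1 = ys2.
  apply: UD Heq.
  - by move=> x; rewrite inE => /orP [/eqP ->|/H1]; [right|left].
  - by move=> x /H2; left.
by apply: Hw; apply: H2; rewrite -Exy mem_head.
Qed.
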